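(* Let $f=(a,b,c,d)$ be a reduced binary cubic form over $\mathbb{F}_q[t]$ of discriminant $D$ with imaginary or unusual Hessian $(P,Q,R)$. Then $|a|\le|D|^{1/4}$, $|b|\le|D|^{1/4}$, $|bc|\le|D|^{1/2}$ and $|ad|\le|D|^{1/2}$.
   Context: $\mathbb{F}_q$ is a finite field with $\gcd(q,6)=1$; $|H|=q^{\deg H}$ for nonzero $H\in\mathbb{F}_q[t]$, $|0|=0$, $\mathrm{sgn}(H)$ = leading coefficient. A binary cubic form $(a,b,c,d)=ax^3+bx^2y+cxy^2+dy^3$ over $\mathbb{F}_q[t]$ has discriminant $D=18abcd+b^2c^2-4ac^3-4b^3d-27a^2d^2$ and Hessian $H_f=(P,Q,R)$, $P=b^2-3ac$, $Q=bc-9ad$, $R=c^2-3bd$, of discriminant $-3D$. $\Delta$ is imaginary if $\deg\Delta$ odd, unusual if $\deg\Delta$ even and $\mathrm{sgn}(\Delta)$ a non-square in $\mathbb{F}_q^*$. Fix a primitive root $h$ of $\mathbb{F}_q^*$, $S=\{h^i:0\le i\le (q-3)/2\}$; assume $\mathrm{sgn}(-3D)\in\{1,h\}$ and $f$ primitive, irreducible. A binary quadratic form $(A,B,C)$ is partially reduced if $|B|<|A|\le|C|$; if $|A|<|C|$ then $\mathrm{sgn}(A)\in\{1,h\}$, if $|A|=|C|$ then $\mathrm{sgn}(A)=1$; and $B\ne0$ implies $\mathrm{sgn}(B)\in S$; it is reduced if partially reduced and either $|A|<|C|$ or it is lexicographically smallest among partially reduced forms in its equivalence class (equivalence via matrices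 over $\mathbb{F}_q[t]$ with determinant in $\mathbb{F}_q^*$, acting by $(f\circ M)(x,y)=f(\alpha x+\beta y,\gamma x+\delta y)$). A cubic form $f$ is reduced if $H_f$ is reduced, $\mathrm{sgn}(a)\in S$, $Q=0$ implies $\mathrm{sgn}(d)\in S$, and, when $H_f$ is unusual, $f$ is lexicographically smallest among all equivalent cubic forms with the same Hessian satisfying these conditions. *)

(* Defs.v *)
From HB Require Import structures.
From mathcomp Require Import all_boot all_order all_algebra.
Set Implicit Arguments. Unset Strict Implicit. Unset Printing Implicit Defensive.
Import Order.TTheory GRing.Theory Num.Theory.
Local Open Scope ring_scope.

Section Defs.
Variable F : finFieldType.
Local Notation P := {poly F}.

Definition absv (p : P) : nat := if p == 0 then 0%N else (#|F| ^ (size p).-1)%N.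
Definition sgn (p : P) : F := lead_coef p.

Definition inS (h x : F) : Prop :=
  exists i : nat, (i <= (#|F| - 3)./2)%N /\ x = h ^+ i.

Definition disc (a b c d : P) : P :=
  18%:R * a * b * c * d + b ^+ 2 * c ^+ 2 - 4%:R * a * c ^+ 3
  - 4%:R * b ^+ 3 * d - 27%:R * a ^+ 2 * d ^+ 2.
Definition hessP (a b c d : P) : P := b ^+ 2 - 3%:R * a * c.
Definition hessQ (a b c d : P) : P := b * c - 9%:R * a * d.
Definition hessR (a b c d : P) : P := c ^+ 2 - 3%:R * b * d.
Definition hess (a b c d : P) : P * P * P := (hessP a b c d, hessQ a b c d, hessR a b c d).

Definition qdisc (A B C : P) : P := B ^+ 2 - 4%:R * A * C.

Definition imaginary (D : P) : Prop := D != 0 /\ odd (size D).-1.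
Definition unusual (D : P) : Prop :=
  D != 0 /\ ~~ odd (size D).-1 /\ ~ (exists s : F, s ^+ 2 = lead_coef D).

(* action (f o M)(x,y) = f(al x + be y, ga x + de y) *)
Definition qact (A B C al be ga de : P) : P * P * P :=
  (A * al ^+ 2 + B * al * ga + C * ga ^+ 2,
   2%:R * A * al * be + B * (al * de + be * ga) + 2%:R * C * ga * de,
   A * be ^+ 2 + B * be * de + C * de ^+ 2).
Definition cact (a b c d al be ga de : P) : P * P * P * P :=
  (a * al ^+ 3 + b * al ^+ 2 * ga + c * al * ga ^+ 2 + d * ga ^+ 3,
   3%:R * a * al ^+ 2 * be + b * (al ^+ 2 * de + 2%:R * al * be * ga)
     + c * (2%:R * al * ga * de + be * ga ^+ 2) + 3%:R * d * ga ^+ 2 * de,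
   3%:R * a * al * be ^+ 2 + b * (2%:R * al * be * de + be ^+ 2 * ga)
     + c * (al * de ^+ 2 + 2%:R * be * ga * de) + 3%:R * d * ga * de ^+ 2,
   a * be ^+ 3 + b * be ^+ 2 * de + c * be * de ^+ 2 + d * de ^+ 3).

Definition admissible (al be ga de : P) : Prop :=
  exists u : F, u != 0 /\ al * de - be * ga = u%:P.

Definition qequiv (f g : P * P * P) : Prop :=
  exists al be ga de, admissible al be ga de /\ g = qact f.1.1 f.1.2 f.2 al be ga de.
Definition cequiv (f g : P * P * P * P) : Prop :=
  exists al be ga de, admissible al be ga de /\
    g = cact f.1.1.1 f.1.1.2 f.1.2 f.2 al be ga de.

(* Elements of F_q: 0 < h^0 < h^1 < ... < h^(q-2);
   polynomials: first by degree, then by coefficients from the leading one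
   down; forms: lexicographically on the coefficient tuples. *)
Definition keyF (h x : F) : nat :=
  if x == 0 then 0%N else (find (fun i => h ^+ i == x) (iota 0 #|F|)).+1.
Fixpoint lexlt (s t : seq nat) : bool :=
  match s, t with
  | x :: s', y :: t' => (x < y)%N || ((x == y) && lexlt s' t')
  | _, _ => false
  end.
Definition polylt (h : F) (p q : P) : bool :=
  (size p < size q)%N ||
  ((size p == size q) && lexlt (map (keyF h) (rev p)) (map (keyF h) (rev q))).
Definition qle (h : F) (f g : P * P * P) : Prop :=
  f = g \/ polylt h f.1.1 g.1.1 \/
  (f.1.1 = g.1.1 /\ (polylt h f.1.2 g.1.2 \/ (f.1.2 = g.1.2 /\ polylt h f.2 g.2))).
Definition cle (h : F) (f g : P * P * P * P) : Prop :=
  f = g \/ polylt h f.1.1.1 g.1.1.1 \/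
  (f.1.1.1 = g.1.1.1 /\ (polylt h f.1.1.2 g.1.1.2 \/
  (f.1.1.2 = g.1.1.2 /\ (polylt h f.1.2 g.1.2 \/
  (f.1.2 = g.1.2 /\ polylt h f.2 g.2))))).

Definition partially_reduced (h : F) (A B C : P) : Prop :=
  [/\ (absv B < absv A)%N, (absv A <= absv C)%N,
      ((absv A < absv C)%N -> sgn A = 1 \/ sgn A = h),
      (absv A = absv C -> sgn A = 1) &
      (B != 0 -> inS h (sgn B))].

Definition qreduced (h : F) (A B C : P) : Prop :=
  partially_reduced h A B C /\
  ((absv A < absv C)%N \/
   forall A' B' C', qequiv (A, B, C) (A', B', C') ->
     partially_reduced h A' B' C' -> qle h (A, B, C) (A', B', C')).

Definition cubic_cond (h : F) (a b c d : P) : Prop :=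
  let: (P0, Q0, R0) := hess a b c d in
  qreduced h P0 Q0 R0 /\ inS h (sgn a) /\ (Q0 = 0 -> inS h (sgn d)).

Definition creduced (h : F) (a b c d : P) : Prop :=
  cubic_cond h a b c d /\
  let: (P0, Q0, R0) := hess a b c d in
  (unusual (qdisc P0 Q0 R0) ->
   forall a' b' c' d', cequiv (a, b, c, d) (a', b', c', d') ->
     hess a' b' c' d' = hess a b c d -> cubic_cond h a' b' c' d' ->
     cle h (a, b, c, d) (a', b', c', d')).

Definition primitive_form (a b c d : P) : Prop :=
  size (gcdp (gcdp a b) (gcdp c d)) = 1%N.

(* irreducible over F_q(t): f(x,y) = y^3 f(x/y,1) with a != 0 and
   a X^3 + b X^2 + c X + d irreducible in F_q(t)[X] *)
Definition irreducible_form (a b c d : P) : Prop :=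
  a != 0 /\
  irreducible_poly (Poly [:: FracField.tofrac d; FracField.tofrac c;
                             FracField.tofrac b; FracField.tofrac a]
                    : {poly {fraction P}}).

End Defs.

(* Main.v *)
Require Import Defs.
From HB Require Import structures.
From mathcomp Require Import all_boot all_order all_algebra all_fingroup all_solvable all_field.
From Stdlib Require Import Ring Lia.
Import GRing.Theory.
Set Implicit Arguments. Unset Strict Implicit. Unset Printing Implicit Defensive.
Local Open Scope ring_scope.

Section Abs.
Variable F : finFieldType.
Local Notation P := {poly F}.

Lemma q_gt1 : (1 < #|F|)%N.
Proof. exact: finNzRing_gt1. Qed.

Lemma absv_le (p r : P) : (absv p <= absv r)%N = (size p <= size r)%N.
Proof.
rewrite /absv; have q1 := q_gt1.
case: (eqVneq p 0) => [->|p0]; first by rewrite size_poly0.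
case: (eqVneq r 0) => [->|r0].
  rewrite size_poly0 leqn0 expn_eq0 leqn0 size_poly_eq0 (negbTE p0).
  by apply/negbTE; rewrite negb_and -lt0n (ltn_trans _ q1).
rewrite leq_exp2l //.
move: p0 r0; rewrite -!size_poly_gt0; case: (size p) => // m _; case: (size r) => //.
Qed.

Lemma absv_lt (p r : P) : (absv p < absv r)%N = (size p < size r)%N.
Proof. by rewrite !ltnNge absv_le. Qed.

Lemma absv_mul (p r : P) : absv (p * r) = (absv p * absv r)%N.
Proof.
rewrite /absv; case: (eqVneq p 0) => [->|p0]; first by rewrite mul0r eqxx.
case: (eqVneq r 0) => [->|r0]; first by rewrite mulr0 eqxx muln0.
rewrite mulf_eq0 (negbTE p0) (negbTE r0) /= size_mul // -expnD.
congr (_ ^ _)%N.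
move: p0 r0; rewrite -!size_poly_gt0; case: (size p) => // m _; case: (size r) => // n _.
by rewrite addSn addnS.
Qed.

Lemma absv_size (p r : P) : size p = size r -> absv p = absv r.
Proof. by move=> e; apply/eqP; rewrite eqn_leq !absv_le e leqnn. Qed.

Lemma absv_eq0 (p : P) : (absv p == 0%N) = (p == 0).
Proof.
rewrite /absv; case: (eqVneq p 0) => [_|p0] //.
rewrite expn_eq0; apply/negbTE; rewrite negb_and -lt0n.
by rewrite (ltn_trans _ q_gt1).
Qed.

End Abs.


Section Gen.
Variables (T : Type) (z o : T) (ad mu : T -> T -> T) (op : T -> T).
Hypothesis Th : ring_theory z o ad mu (fun x y => ad x (op y)) op eq.
Add Ring GR : Th.
Fixpoint num (n : nat) : T := match n with 0%N => z | S k => ad o (num k) end.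
Local Infix "+" := ad.
Local Infix "*" := mu.
Local Notation "- x" := (op x).
Local Notation "x - y" := (ad x (op y)).
Local Notation "x ^2" := (x * x) (at level 2).
Local Notation "x ^3" := (x * (x * x)) (at level 2).

Lemma gidP a b c d :
  ((b^2 - num 3*a*c) * b^2 + (b*c - num 9*a*d)*b* -(num 3*a) + (c^2 - num 3*b*d)*(-(num 3*a))^2)
  = (b^2 - num 3*a*c)^2.
Proof. cbn [num]; ring. Qed.

Lemma gidR a b c d :
  ((b^2 - num 3*a*c) * (num 3 * d)^2 + (b*c - num 9*a*d)*(num 3 * d)* -c + (c^2 - num 3*b*d)*c^2)
  = (c^2 - num 3*b*d)^2.
Proof. cbn [num]; ring. Qed.

Lemma gidD a b c d :
  (b*c - num 9*a*d)^2 - num 4 * (b^2 - num 3*a*c) * (c^2 - num 3*b*d) =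
  - num 3 * (num 18 * a * b * c * d + b^2 * c^2 - num 4 * a * c^3 - num 4 * b^3 * d
             - num 27 * a^2 * d^2).
Proof. cbn [num]; ring. Qed.

Lemma gidS lP lR lx ly t :
  (num 2 * lR * ly * t)^2 = num 4 * lR * t^2 * (lP * lx^2 + lR * ly^2) - num 4 * lP * lR * (lx*t)^2.
Proof. cbn [num]; ring. Qed.
End Gen.

Lemma Rth (R : comNzRingType) : @ring_theory R 0 1 +%R *%R (fun x y => x + - y) -%R eq.
Proof.
constructor=> //; [exact: add0r|exact: addrC|exact: addrA|exact: mul1r|exact: mulrC|exact: mulrA|exact: mulrDl|exact: subrr].
Qed.

Section Inst.
Variable F : finFieldType.
Implicit Types a b c d : {poly F}.
Lemma idP2 a b c d :
  hessP a b c d * b ^+ 2 + hessQ a b c d * b * (- (3%:R * a)) + hessR a b c d * (- (3%:R * a)) ^+ 2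
  = hessP a b c d ^+ 2.
Proof. rewrite /hessP /hessQ /hessR !expr2 !mulrS !mulr0n. exact (gidP (Rth {poly F}) a b c d). Qed.
Lemma idR2 a b c d :
  hessP a b c d * (3%:R * d) ^+ 2 + hessQ a b c d * (3%:R * d) * (- c) + hessR a b c d * c ^+ 2
  = hessR a b c d ^+ 2.
Proof. rewrite /hessP /hessQ /hessR !expr2 !mulrS !mulr0n. exact (gidR (Rth {poly F}) a b c d). Qed.
Lemma idD a b c d :
  qdisc (hessP a b c d) (hessQ a b c d) (hessR a b c d) = - 3%:R * disc a b c d.
Proof. have e3 : forall x : {poly F}, x ^+ 3 = x * (x * x) by move=> x; rewrite exprS expr2.
rewrite /qdisc /disc /hessP /hessQ /hessR !e3 !expr2 !mulrS !mulr0n. exact (gidD (Rth {poly F}) a b c d). Qed.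
Lemma idS (lP lR lx ly t : F) :
  (2%:R * lR * ly * t) ^+ 2 = 4%:R * lR * t ^+ 2 * (lP * lx ^+ 2 + lR * ly ^+ 2) - 4%:R * lP * lR * (lx * t) ^+ 2.
Proof. rewrite !expr2 !mulrS !mulr0n. exact (gidS (Rth F) lP lR lx ly t). Qed.
End Inst.

Ltac nlia := repeat match goal with
  | H : is_true (_ <= _)%N |- _ => move/leP in H
  | H : is_true (_ < _)%N |- _ => move/ltP in H end;
  first [apply/ltP | apply/leP | idtac];
  repeat match goal with
  | H : context [predn] |- _ => rewrite -subn1 in H
  | H : context [addn] |- _ => rewrite -plusE in H
  | H : context [subn] |- _ => rewrite -minusE in H
  | H : context [muln] |- _ => rewrite -multE in H end;
  rewrite -?subn1 -?plusE -?minusE -?multE; lia.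
Ltac nlia_pre := repeat match goal with
  | H : is_true (_ <= _)%N |- _ => move/leP in H
  | H : is_true (_ < _)%N |- _ => move/ltP in H end;
  first [apply/ltP | apply/leP | idtac];
  repeat match goal with
  | H : context [predn] |- _ => rewrite -subn1 in H
  | H : context [addn] |- _ => rewrite -plusE in H
  | H : context [subn] |- _ => rewrite -minusE in H
  | H : context [muln] |- _ => rewrite -multE in H end;
  rewrite -?subn1 -?plusE -?minusE -?multE.

Section NC.
Variable F : finFieldType.
Local Notation P := {poly F}.

Lemma sizeM (p r : P) : p != 0 -> r != 0 -> size (p * r) = (size p + size r).-1.
Proof. exact: size_mul. Qed.

Lemma size_gt0' (p : P) : p != 0 -> (0 < size p)%N.
Proof. by rewrite size_poly_gt0. Qed.

Lemma qdisc_size (P0 Q0 R0 : P) : (4%:R : F) != 0 ->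
  (size Q0 < size P0)%N -> (size P0 <= size R0)%N ->
  size (qdisc P0 Q0 R0) = size (P0 * R0) /\
  lead_coef (qdisc P0 Q0 R0) = - (4%:R * lead_coef P0 * lead_coef R0).
Proof.
move=> h4 sQP sPR.
have P0n : P0 != 0 by rewrite -size_poly_gt0 (leq_ltn_trans _ sQP).
have R0n : R0 != 0 by rewrite -size_poly_gt0 (leq_trans _ sPR) // (leq_ltn_trans _ sQP).
have e4 : 4%:R * P0 * R0 = (4%:R : F)%:P * (P0 * R0) by rewrite polyC_natr mulrA.
have s4 : size (4%:R * P0 * R0) = size (P0 * R0) by rewrite e4 size_Cmul.
have sQ2 : (size (Q0 ^+ 2) < size (- (4%:R * P0 * R0)))%N.
  rewrite size_polyN s4 sizeM //.
  case: (eqVneq Q0 0) => [->|Q0n]; first by rewrite expr2 mul0r size_poly0; move: (size_gt0' P0n) (size_gt0' R0n) => h1 h2; nlia.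
  rewrite expr2 sizeM //; move: (size_gt0' Q0n) => h1; nlia.
rewrite /qdisc addrC; split; first by rewrite size_polyDl // size_polyN.
rewrite lead_coefDl // lead_coefN e4 lead_coefM lead_coefC lead_coefM mulrA //.
Qed.


Lemma nocancel (P0 Q0 R0 x y : P) :
  (2%:R : F) != 0 ->
  (size Q0 < size P0)%N -> (size P0 <= size R0)%N ->
  imaginary (qdisc P0 Q0 R0) \/ unusual (qdisc P0 Q0 R0) ->
  size (P0 * x ^+ 2 + Q0 * x * y + R0 * y ^+ 2) = maxn (size (P0 * x ^+ 2)) (size (R0 * y ^+ 2)).
Proof.
move=> h2 sQP sPR hD.
have h4 : (4%:R : F) != 0 by rewrite (natrM _ 2 2) mulf_neq0.
have [sD lD] := qdisc_size h4 sQP sPR.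
have P0n : P0 != 0 by rewrite -size_poly_gt0 (leq_ltn_trans _ sQP).
have R0n : R0 != 0 by rewrite -size_poly_gt0 (leq_trans _ sPR) // (leq_ltn_trans _ sQP).
have gP := size_gt0' P0n; have gR := size_gt0' R0n.
set u := P0 * x ^+ 2; set v := R0 * y ^+ 2; set w := Q0 * x * y.
have Huv : size (u + v) = maxn (size u) (size v).
  case: (eqVneq x 0) => [x0|xn].
    by rewrite /u x0 expr2 mul0r mulr0 add0r size_poly0 max0n.
  case: (eqVneq y 0) => [y0|yn].
    by rewrite /v y0 expr2 mul0r mulr0 addr0 size_poly0 maxn0.
  have gx := size_gt0' xn; have gy := size_gt0' yn.
  have su : size u = (size P0 + (size x + size x).-1).-1 by rewrite /u expr2 !sizeM // mulf_neq0.
  have sv : size v = (size R0 + (size y + size y).-1).-1 by rewrite /v expr2 !sizeM // mulf_neq0.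
  have un : u != 0 by rewrite /u mulf_neq0 // expf_neq0.
  have vn : v != 0 by rewrite /v mulf_neq0 // expf_neq0.
  case: (ltngtP (size u) (size v)) => [ltuv|ltvu|equv].
  - by rewrite addrC size_polyDl // (maxn_idPr (ltnW ltuv)).
  - by rewrite size_polyDl // (maxn_idPl (ltnW ltvu)).
  -
    have lsum : lead_coef u + lead_coef v != 0.
      case: hD => [[Dn Dodd]|[Dn [Dnodd nsq]]].
        exfalso; move: Dodd; rewrite sD sizeM // => Dodd.
        have hh : ((size P0 + size R0).-2./2 + (size P0 + size R0).-2./2).+1 = (size P0 + size R0).-2.
          by rewrite addnn -[in RHS](odd_double_half ((size P0+size R0).-2)) Dodd.
        move: equv; rewrite su sv => equv; nlia.
      apply/negP => /eqP hs; apply: nsq.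
      exists (2%:R * lead_coef R0 * lead_coef y * (lead_coef x)^-1).
      rewrite (idS (lead_coef P0) _ (lead_coef x)) lD.
      move: hs; rewrite /u /v !lead_coefM -!expr2 => ->.
      rewrite mulfV ?lead_coef_eq0 // expr1n mulr0 mulr1 sub0r.
      by [].
    apply/eqP; rewrite eqn_leq; apply/andP; split.
      by rewrite (leq_trans (size_polyD _ _)) // -equv maxnn.
    rewrite leqNgt; apply/negP => lt.
    have lt' : (size (u + v)%R <= (size u).-1)%N by move: (size_gt0' un) => g; nlia.
    move/leq_sizeP: lt' => /(_ _ (leqnn _)); rewrite coefD.
    rewrite -lead_coefE equv -lead_coefE => /eqP; by rewrite (negbTE lsum).
rewrite -addrA (addrC w) addrA.
case: (eqVneq w 0) => [->|wn]; first by rewrite addr0.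
rewrite size_polyDl Huv //.
move: (wn); rewrite /w !mulf_eq0 !negb_or => /andP[/andP[Qn xn] yn].
have gx := size_gt0' xn; have gy := size_gt0' yn; have gQ := size_gt0' Qn.
have su : size u = (size P0 + (size x + size x).-1).-1 by rewrite /u expr2 !sizeM // mulf_neq0.
have sv : size v = (size R0 + (size y + size y).-1).-1 by rewrite /v expr2 !sizeM // mulf_neq0.
have sw : size w = ((size Q0 + size x).-1 + size y).-1 by rewrite /w !sizeM // mulf_neq0.
rewrite sw su sv leq_max; apply/orP; case: (leqP (size v) (size u)) => hh; [left|right]; move: hh; rewrite ?su ?sv => hh; nlia.
Qed.

End NC.

Lemma char_dvd (F: finFieldType) p : p \in [pchar F] -> (p %| #|F|)%N.
Proof.
move=> Hp; have := fin_ring_pchar_abelem Hp; move/abelem_pgroup => pg.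
have [|_ Hd _] := pgroup_pdiv pg; last by rewrite cardsT in Hd.
by rewrite -cardG_gt1 cardsT finNzRing_gt1.
Qed.

Lemma natF_neq0 (F : finFieldType) n : prime n -> ~~ (n %| #|F|)%N -> (n%:R : F) != 0.
Proof.
move=> pn nd; apply/negP => /eqP e; move/negP: nd; apply; apply: char_dvd.
by rewrite inE pn /= e eqxx.
Qed.

Local Open Scope nat_scope.
Lemma arith (A B C D p r : nat) : 0 < p -> p <= r ->
  r * (A * A) <= p * p -> p * (B * B) <= p * p -> p * (D * D) <= r * r -> r * (C * C) <= r * r ->
  [/\ A ^ 4 <= p * r, B ^ 4 <= p * r, (B * C) ^ 2 <= p * r & (A * D) ^ 2 <= p * r].
Proof.
move=> p0 pr F1 F2 F3 F4.
have r0 : 0 < r by exact: leq_trans pr.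
have rr : 0 < r * r by rewrite muln_gt0 r0.
have pr0 : 0 < p * r by rewrite muln_gt0 r0 p0.
have hB : B * B <= p by rewrite -(leq_pmul2l p0).
have hC : C * C <= r by rewrite -(leq_pmul2l r0).
have e4 : forall X, X ^ 4 = (X * X) * (X * X) by move=> X; rewrite (expnM X 2 2) -!mulnn.
split.
- rewrite e4 -(leq_pmul2l rr).
  rewrite mulnACA (leq_trans (leq_mul F1 F1)) //.
  by apply: leq_mul; apply: leq_mul.
- by rewrite e4 (leq_trans (leq_mul hB hB)) // leq_mul.
- by rewrite expnMn -!mulnn leq_mul.
- rewrite expnMn -!mulnn -(leq_pmul2l pr0).
  rewrite (mulnC p r) -[r * p * _]mulnACA.
  apply: leq_trans (leq_mul F1 F3) _; by rewrite mulnACA (mulnC p r).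
Qed.

Local Open Scope ring_scope.

Lemma absvC (F : finFieldType) (k : F) (p : {poly F}) : k != 0 -> absv (k%:P * p) = absv p.
Proof. by move=> k0; apply: absv_size; rewrite size_Cmul. Qed.

Lemma absvN (F : finFieldType) (p : {poly F}) : absv (- p) = absv p.
Proof. by apply: absv_size; rewrite size_polyN. Qed.

Unset Implicit Arguments.
Theorem mainTheorem10 (F : finFieldType) (h : F) (a b c d : {poly F}) :
  coprime #|F| 6 ->
  (#|F|.-1).-primitive_root h ->
  (sgn (- 3%:R * disc a b c d) = 1 \/ sgn (- 3%:R * disc a b c d) = h) ->
  primitive_form a b c d ->
  irreducible_form a b c d ->
  creduced h a b c d ->
  (imaginary (qdisc (hessP a b c d) (hessQ a b c d) (hessR a b c d)) \/
   unusual (qdisc (hessP a b c d) (hessQ a b c d) (hessR a b c d))) ->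
  [/\ (absv a ^ 4 <= absv (disc a b c d))%N,
      (absv b ^ 4 <= absv (disc a b c d))%N,
      (absv (b * c) ^ 2 <= absv (disc a b c d))%N &
      (absv (a * d) ^ 2 <= absv (disc a b c d))%N].
Proof.
move=> hcop _ _ _ _ hred hD.
have h2 : (2%:R : F) != 0.
  apply: natF_neq0 => //; apply/negP => d2; by move: (coprime_dvdl d2 hcop).
have h3 : (3%:R : F) != 0.
  apply: natF_neq0 => //; apply/negP => d3; by move: (coprime_dvdl d3 hcop).
have h4 : (4%:R : F) != 0 by rewrite (natrM _ 2 2) mulf_neq0.
case: hred => hc _; move: hc; rewrite /cubic_cond /hess /= => [[[pr _] _]].
case: pr => aQP aPR _ _ _.
have p0 : (0 < absv (hessP a b c d))%N by apply: leq_ltn_trans aQP.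
have sQP := aQP; rewrite absv_lt in sQP.
have sPR := aPR; rewrite absv_le in sPR.
have [sDq _] := qdisc_size h4 sQP sPR.
have e3 : (- 3%:R : {poly F}) * disc a b c d = (- 3%:R : F)%:P * disc a b c d.
  by rewrite polyCN polyC_natr.
have sizeD : size (disc a b c d) = size (hessP a b c d * hessR a b c d).
  by rewrite -sDq idD e3 size_Cmul // oppr_eq0.
have absD : absv (disc a b c d) = (absv (hessP a b c d) * absv (hessR a b c d))%N.
  by rewrite -absv_mul; apply: absv_size.
have N1 := nocancel b (- (3%:R * a)) h2 sQP sPR hD; rewrite idP2 in N1.
have N2 := nocancel (3%:R * d) (- c) h2 sQP sPR hD; rewrite sqrrN idR2 in N2.
have e3a : absv (- (3%:R * a)) = absv a by rewrite absvN -polyC_natr absvC.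
have e3d : absv (3%:R * d) = absv d by rewrite -polyC_natr absvC.
have eNc : absv (- c) = absv c by rewrite absvN.
have F1 : (absv (hessR a b c d) * (absv a * absv a) <= absv (hessP a b c d) * absv (hessP a b c d))%N.
  by rewrite -e3a -!absv_mul -expr2 absv_le N1 leq_maxr.
have F2 : (absv (hessP a b c d) * (absv b * absv b) <= absv (hessP a b c d) * absv (hessP a b c d))%N.
  by rewrite -!absv_mul -expr2 absv_le N1 leq_maxl.
have F3 : (absv (hessP a b c d) * (absv d * absv d) <= absv (hessR a b c d) * absv (hessR a b c d))%N.
  by rewrite -e3d -!absv_mul -expr2 absv_le N2 leq_maxl.
have F4 : (absv (hessR a b c d) * (absv c * absv c) <= absv (hessR a b c d) * absv (hessR a b c d))%N.
  by rewrite -!absv_mul -expr2 absv_le N2 leq_maxr.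
rewrite absD !absv_mul.
exact: arith p0 aPR F1 F2 F3 F4.
Qed.
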